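(* Let $\mathcal S$ be a finite collection of subsets of $[d]$ satisfying the merged-staircase property, i.e. its elements can be ordered $S_1,\dots,S_r$ so that $|S_i\setminus\bigcup_{j<i}S_j|\le1$ for every $i$. Draw $\{\alpha_S\}_{S\in\mathcal S}$ from any probability measure on $\mathbb R^{|\mathcal S|}$ absolutely continuous with respect to Lebesgue measure, and let $f^*=\sum_{S\in\mathcal S}\alpha_S\chi_S$. Then $f^*$ satisfies the stable merged-staircase property almost surely.
   Context: $\chi_S(\mathbf x)=\prod_{j\in S}x_j$ on $\{\pm1\}^d$. Every $f:\{\pm1\}^m\to\mathbb R$ has a unique expansion $f=\sum_S\beta_S\chi_S$; $f$ satisfies MSP if the sets $S$ with $\beta_S\ne0$ can be ordered $S_1,\dots,S_r$ with $|S_i\setminus\bigcup_{j<i}S_j|\le1$ for all $i$. A cell is $C=\{\mathbf x\in\{\pm1\}^d:x_j=z_j,\ j\in J(C)\}$; the restriction $f^*|_C$ is viewed as a function of the free coordinates $x_j$, $j\notin J(C)$. $f^*$ satisfies the stable merged-staircase property (SMSP) if $f^*|_C$ satisfies MSP for every cell $C$. *)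

(* Defs.v *)
From HB Require Import structures.
From mathcomp Require Import all_boot all_order all_algebra.
From mathcomp Require Import all_classical all_reals all_analysis.
Set Implicit Arguments. Unset Strict Implicit. Unset Printing Implicit Defensive.
Import Order.TTheory GRing.Theory Num.Theory.
Local Open Scope classical_set_scope.
Local Open Scope ring_scope.

Section Boolean.
Variable R : realType.
Variable I : finType.

(* a point of {+-1}^I is encoded as x : {ffun I -> bool}; coordinate value
   x_j = -1 if x j = true and +1 otherwise *)
Definition pm1 (b : bool) : R := if b then -1 else 1.

Definition chi (S : {set I}) (x : {ffun I -> bool}) : R :=
  \prod_(j in S) pm1 (x j).

Definition msp_family (F : {set {set I}}) : Prop :=
  exists s : seq {set I}, [/\ uniq s, s =i F &
    forall i, (i < size s)%N ->
      (#| nth finset.set0 s i :\: \big[@finset.setU _/finset.set0]_(T <- take i s) T | <= 1)%N].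

Definition MSP (f : {ffun I -> bool} -> R) : Prop :=
  exists beta : {set I} -> R,
    (forall x, f x = \sum_(S : {set I}) beta S * chi S x) /\
    msp_family [set S | beta S != 0].
End Boolean.

(* restriction of f : {+-1}^d -> R to the cell {x | x_j = z_j, j in J},
   as a function of the free coordinates j \notin J *)
Definition restrict (R : realType) (d : nat) (f : {ffun 'I_d -> bool} -> R)
    (J : {set 'I_d}) (z : {ffun 'I_d -> bool})
    (x : {ffun {j : 'I_d | j \notin J} -> bool}) : R :=
  f [ffun j => match insub j with Some k => x k | None => z j end].

Definition SMSP (R : realType) (d : nat) (f : {ffun 'I_d -> bool} -> R) : Prop :=
  forall (J : {set 'I_d}) (z : {ffun 'I_d -> bool}), MSP (@restrict R d f J z).

(* f* = sum_{S in SS} alpha_S chi_S, the coefficients being listed in a tuple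
   indexed by 'I_#|SS| through the enumeration of SS *)
Definition fstar (R : realType) (d : nat) (SS : {set {set 'I_d}})
    (a : #|SS|.-tuple R) (x : {ffun 'I_d -> bool}) : R :=
  \sum_(i < #|SS|) tnth a i * chi R (@enum_val _ (mem SS) i) x.

(* closed box in R^n and Lebesgue-null sets of R^n (outer measure zero:
   coverable by countably many boxes of arbitrarily small total volume) *)
Definition box (R : realType) (n : nat) (lo hi : n.-tuple R) : set (n.-tuple R) :=
  [set x | forall i, tnth lo i <= tnth x i <= tnth hi i].

Definition lebesgue_null (R : realType) (n : nat) (A : set (n.-tuple R)) : Prop :=
  forall e : R, 0 < e -> exists lo hi : nat -> n.-tuple R,
    [/\ forall k i, tnth (lo k) i <= tnth (hi k) i,
        A `<=` \bigcup_k box (lo k) (hi k) &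
        (\sum_(0 <= k <oo) (\prod_(i < n) (tnth (hi k) i - tnth (lo k) i))%:E
           <= e%:E)%E].

Definition abs_cont_lebesgue (R : realType) (n : nat)
    (P : probability (n.-tuple R) R) : Prop :=
  forall A : set (n.-tuple R), measurable A -> lebesgue_null A -> P A = 0%E.

(* Main.v *)
Require Import Defs.
From HB Require Import structures.
From mathcomp Require Import all_boot all_order all_algebra.
From mathcomp Require Import all_classical all_reals all_analysis.
From mathcomp Require Import measurable_realfun.
From mathcomp Require Import ring lra.
Import Order.TTheory GRing.Theory Num.Theory.
Set Implicit Arguments. Unset Strict Implicit. Unset Printing Implicit Defensive.
Local Open Scope ring_scope.

Definition Ubig (X : finType) (t : seq {set X}) : {set X} :=
  \big[@finset.setU _/finset.set0]_(T <- t) T.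

Definition stair (X : finType) (s : seq {set X}) : Prop :=
  forall i, (i < size s)%N ->
    (#| nth finset.set0 s i :\: Ubig (take i s) | <= 1)%N.

Lemma stair_rcons (X : finType) (s : seq {set X}) x :
  stair (rcons s x) <-> stair s /\ (#| x :\: Ubig s | <= 1)%N.
Proof.
rewrite /stair size_rcons; split.
  move=> H; split.
    move=> i lt; have := H i (leq_trans lt (leqnSn _)).
    by rewrite -cats1 nth_cat lt take_cat lt.
  have := H (size s) (leqnn _).
  by rewrite -cats1 nth_cat ltnn subnn take_cat ltnn subnn take0 cats0.
move=> [H1 H2] i; rewrite ltnS leq_eqVlt => /orP[/eqP ->|lt].
  by rewrite -cats1 nth_cat ltnn subnn take_cat ltnn subnn take0 cats0.
by rewrite -cats1 nth_cat lt take_cat lt; apply: H1.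
Qed.

Lemma Ubig_eq (X : finType) (s t : seq {set X}) : s =i t -> Ubig s = Ubig t.
Proof. by move=> st; apply: eq_big_idem => //; move=> A; exact: finset.setUid. Qed.

Definition dedup (X : finType) (s : seq {set X}) := rev (undup (rev s)).

Lemma mem_dedup (X : finType) (s : seq {set X}) : dedup s =i s.
Proof. by move=> x; rewrite /dedup mem_rev mem_undup mem_rev. Qed.

Lemma uniq_dedup (X : finType) (s : seq {set X}) : uniq (dedup s).
Proof. by rewrite /dedup rev_uniq undup_uniq. Qed.

Lemma stair_dedup (X : finType) (s : seq {set X}) : stair s -> stair (dedup s).
Proof.
elim/last_ind: s => [//|s x IH] /stair_rcons [H1 H2].
rewrite /dedup rev_rcons /=; case: ifP => xs.
  exact: IH.
rewrite rev_cons; apply/stair_rcons; split; first exact: IH.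
by rewrite (Ubig_eq (mem_dedup s)).
Qed.

Section Phi.
Variables (X : finType) (P : pred X).
Definition phi (S : {set X}) : {set {x : X | P x}} := [set k | val k \in S].

Lemma phi0 : phi finset.set0 = finset.set0.
Proof. by apply/setP => k; rewrite !inE. Qed.
Lemma phiU A B : phi (A :|: B) = phi A :|: phi B.
Proof. by apply/setP => k; rewrite !inE. Qed.
Lemma phiD A B : phi (A :\: B) = phi A :\: phi B.
Proof. by apply/setP => k; rewrite !inE. Qed.
Lemma card_phi A : (#|phi A| <= #|A|)%N.
Proof.
rewrite -(card_imset _ val_inj); apply: subset_leq_card.
by apply/fintype.subsetP => y /imsetP[k]; rewrite inE => ? ->.
Qed.
Lemma Ubig_phi t : Ubig (map phi t) = phi (Ubig t).
Proof.
rewrite /Ubig big_map; apply: esym; apply: (big_morph phi phiU phi0).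
Qed.
Lemma stair_map s : stair s -> stair (map phi s).
Proof.
move=> H i; rewrite size_map => lt.
rewrite -phi0 (nth_map finset.set0) // -map_take Ubig_phi -phiD.
exact: leq_trans (card_phi _) (H i lt).
Qed.
End Phi.

Section Restr.
Variables (R : realType) (d : nat) (J : {set 'I_d}) (z : {ffun 'I_d -> bool}).
Definition PJ : pred 'I_d := [pred j | j \notin J].
Definition ext (x : {ffun {j : 'I_d | j \notin J} -> bool}) : {ffun 'I_d -> bool} :=
  [ffun j => match insub j with Some k => x k | None => z j end].
Definition sg (S : {set 'I_d}) : R := \prod_(j in S :&: J) pm1 R (z j).

Lemma chi_ext S x : chi R S (ext x) = sg S * chi R (phi PJ S) x.
Proof.
rewrite /chi (bigID (fun j => j \in J)) /=; congr (_ * _).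
  apply: eq_big => [j|j /andP[_ jJ]]; first by rewrite finset.in_setI.
  by rewrite /ext ffunE insubF // /PJ jJ.
transitivity (\prod_(j in PJ) (if j \in S then pm1 R (ext x j) else 1)).
  rewrite big_mkcond [RHS]big_mkcond; apply: eq_bigr => j _.
  by rewrite /PJ !inE; case: (j \in S); case: (j \in J).
rewrite big_sub /phi [RHS]big_mkcond; apply: eq_bigr => k _.
by rewrite finset.inE /ext ffunE valK.
Qed.

Variables (SS : {set {set 'I_d}}) (a : #|SS|.-tuple R).
Definition E (i : 'I_#|SS|) : {set 'I_d} := @enum_val _ (mem SS) i.
Definition beta (T : {set {x : 'I_d | PJ x}}) : R :=
  \sum_(i < #|SS| | phi PJ (E i) == T) tnth a i * sg (E i).

Lemma restr_expand x :
  @Defs.restrict R d (fstar a) J z x = \sum_T beta T * chi R T x.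
Proof.
rewrite /Defs.restrict /fstar -/(ext x).
under eq_bigr do rewrite chi_ext.
rewrite (partition_big (fun i => phi PJ (E i)) predT) //=.
apply: eq_bigr => T _; rewrite /beta mulr_suml.
by apply: eq_bigr => i /eqP <-; rewrite mulrA.
Qed.

Lemma sg_pm S : sg S = 1 \/ sg S = -1.
Proof.
rewrite /sg; apply: (big_ind (fun r : R => r = 1 \/ r = -1)); first by left.
  by move=> r1 r2 [->|->] [->|->]; rewrite ?mulr1 ?mul1r ?mulrNN ?mulr1; auto.
by move=> j _; rewrite /pm1; case: (z j); auto.
Qed.

Definition w3 (c : 'I_3) : R := match val c with 0%N => 0 | 1%N => 1 | _ => -1 end.

Definition generic :=
  forall c : {ffun 'I_#|SS| -> 'I_3}, c != [ffun => ord0] ->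
    \sum_i w3 (c i) * tnth a i != 0.

Lemma beta_neq0 (gen : generic) T :
  beta T != 0 <-> exists2 S, S \in SS & phi PJ S = T.
Proof.
split.
  move=> bT; case: (pselect (exists2 S, S \in SS & phi PJ S = T)) => // nS.
  exfalso; move/eqP: bT; apply; apply: big1 => i /eqP Ei.
  by exfalso; apply: nS; exists (E i) => //; exact: enum_valP.
move=> [S SSS <-].
pose c := [ffun i => if phi PJ (E i) == phi PJ S then
  (if sg (E i) == 1 then (inord 1 : 'I_3) else inord 2) else ord0].
have /gen : c != [ffun => ord0].
  apply/eqP => /ffunP /(_ (enum_rank_in SSS S)) /(congr1 val).
  rewrite !ffunE /E enum_rankK_in // eqxx.
  by case: ifP; rewrite /= inordK.
apply: contra => /eqP bT; apply/eqP; rewrite -[RHS]bT /beta [RHS]big_mkcond /=.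
apply: eq_bigr => i _; rewrite ffunE; case: ifP => _; last by rewrite /w3 /= mul0r.
case: eqP => [->|ne]; first by rewrite /w3 /= inordK // mul1r mulr1.
have -> : sg (E i) = -1 by case: (sg_pm (E i)).
by rewrite /w3 /= inordK // mulN1r mulrN1.
Qed.
End Restr.

Lemma smsp_of_generic (R : realType) (d : nat) (SS : {set {set 'I_d}})
  (a : #|SS|.-tuple R) : msp_family SS -> generic a -> SMSP (fstar a).
Proof.
move=> [s [us sSS st]] gen J z.
exists (@beta _ _ J z _ a); split; first by move=> x; exact: restr_expand.
exists (dedup (map (phi (PJ J)) s)); split.
- exact: uniq_dedup.
- move=> T; rewrite mem_dedup finset.inE.
  apply/mapP/idP.
    by move=> [S Ss ->]; apply/(@beta_neq0 _ _ J z _ _ gen); exists S => //; rewrite -sSS.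
  by move/(@beta_neq0 _ _ J z _ _ gen) => [S SSS <-]; exists S => //; rewrite sSS.
- have := stair_dedup (@stair_map _ (PJ J) _ st). by [].
Qed.

Local Open Scope classical_set_scope.
Local Open Scope ring_scope.

Lemma hyper_null (R : realType) n (c : 'I_n -> R) (k : 'I_n) (M : R) :
  c k != 0 -> 0 < M ->
  lebesgue_null [set a : n.-tuple R |
    \sum_i c i * tnth a i = 0 /\ forall i, `|tnth a i| <= M].
Proof.
move=> ck M0 e e0.
pose b i := c i / c k.
pose B := \sum_(i | i != k) `|b i|.
pose C := \prod_(i | i != k) (M *+ 2).
have B0 : 0 <= B by apply: sumr_ge0 => i _; exact: normr_ge0.
have C0 : 0 <= C by apply: prodr_ge0 => i _; rewrite mulrn_wge0 // ltW.
pose N' := Num.trunc (B * M * C *+ 4 / e).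
pose N := N'.+1.
have N0 : (0 : R) < N%:R by rewrite ltr0Sn.
pose h : R := M *+ 2 / N%:R.
have h0 : 0 < h by rewrite divr_gt0 // mulrn_wgt0.
have Bh0 : 0 <= B * h by rewrite mulr_ge0 // ltW.
pose G := {ffun 'I_n -> 'I_N}.
pose p (g : G) i := - M + (g i)%:R * h.
pose xg (g : G) := - \sum_(i | i != k) b i * p g i.
pose lo (g : G) : n.-tuple R := [tuple if i == k then xg g - B * h else p g i | i < n].
pose hi (g : G) : n.-tuple R := [tuple if i == k then
   (if g k == ord0 then xg g + B * h else xg g - B * h) else p g i + h | i < n].
pose g0 : G := [ffun => ord0].
pose s := index_enum G.
pose LO m := if (m < size s)%N then lo (nth g0 s m) else lo g0.
pose HI m := if (m < size s)%N then hi (nth g0 s m) else lo g0.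
have lohi : forall m i, tnth (LO m) i <= tnth (HI m) i.
  move=> m i; rewrite /LO /HI; case: ifP => _; rewrite !tnth_mktuple //.
  case: eqP => _; last lra.
  case: ifP => _; lra.
exists LO, HI; split => //.
- move=> a [sum0 bnd].
  pose t i := (tnth a i + M) / h.
  pose g : G := [ffun i => if i == k then ord0 else inord (minn (Num.trunc (t i)) N')].
  have key : forall i, i != k -> p g i <= tnth a i <= p g i + h.
    move=> i ik; rewrite /p /g ffunE (negbTE ik) inordK; last by rewrite ltnS geq_minr.
    have := bnd i; rewrite ler_norml => /andP[a1 a2].
    have t0 : 0 <= t i.
      rewrite /t divr_ge0 //; [lra|exact: ltW].
    have tN : t i <= N%:R.
      rewrite /t ler_pdivrMr // /h mulrCA mulfV ?mulr1; last by rewrite gt_eqF.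
      lra.
    have ta : tnth a i = t i * h - M.
      rewrite /t divfK; first ring.
      by rewrite gt_eqF.
    have /andP[q1 q2] : (minn (Num.trunc (t i)) N')%:R <= t i <= (minn (Num.trunc (t i)) N')%:R + 1.
      have /andP[u1 u2] := truncn_itv t0.
      case: (leqP (Num.trunc (t i)) N') => hq.
        rewrite -natr1 in u2; lra.
      idtac.
      have : (N'.+1 <= Num.trunc (t i))%N by [].
      rewrite -(ler_nat R) => u3; rewrite -natr1 in u3.
      have : (N%:R : R) = N'%:R + 1 by rewrite -natr1.
      lra.
    rewrite ta; apply/andP; split; nra.
  exists (index g s) => //.
  have gs : (index g s < size s)%N by rewrite index_mem mem_index_enum.
  rewrite /LO /HI gs nth_index ?mem_index_enum // => i.
  rewrite !tnth_mktuple; case: eqP => [->|/eqP ik]; last exact: key.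
  rewrite /g ffunE eqxx eqxx.
  have ak : tnth a k = - \sum_(i | i != k) b i * tnth a i.
    rewrite (bigD1 k) //= in sum0.
    apply: (mulfI ck); rewrite mulrN mulr_sumr.
    have -> : \sum_(i | i != k) c k * (b i * tnth a i) = \sum_(i | i != k) c i * tnth a i.
      by apply: eq_bigr => j _; rewrite /b; field.
    lra.
  have : `|tnth a k - xg g| <= B * h.
    rewrite ak /xg opprK addrC -sumrB.
    apply: le_trans (ler_norm_sum _ _ _) _.
    rewrite /B mulr_suml; apply: ler_sum => j jk.
    rewrite -mulrBr normrM ler_wpM2l //.
    have := key j jk; rewrite ler_norml => /andP[k1 k2]; apply/andP; split; lra.
  rewrite ler_norml => /andP[k1 k2]; apply/andP; split; lra.
- have vol0 : forall m, 0 <= \prod_(i < n) (tnth (HI m) i - tnth (LO m) i).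
    by move=> m; apply: prodr_ge0 => i _; rewrite subr_ge0.
  rewrite (nneseries_split 0 (size s)); last by move=> m _; rewrite lee_fin.
  rewrite add0n eseries0 ?adde0; last first.
    move=> m sm _; rewrite /HI /LO ltnNge sm /= (bigD1 k) //= subrr mul0r //.
  rewrite sumEFin lee_fin.
  pose W i (j : 'I_N) := if i == k then (if j == ord0 then B * h *+ 2 else 0) else h.
  have -> : \sum_(0 <= m < size s) \prod_(i < n) (tnth (HI m) i - tnth (LO m) i)
      = \sum_(g : G) \prod_i W i (g i).
    rewrite big_nat_cond.
    transitivity (\sum_(0 <= m < size s)
       \prod_(i < n) (tnth (hi (nth g0 s m)) i - tnth (lo (nth g0 s m)) i)).
      rewrite [RHS]big_nat_cond; apply: eq_bigr => m /andP[/andP[_ ms] _].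
      by rewrite /HI /LO ms.
    rewrite [RHS](big_nth g0) /=.
    apply: eq_bigr => m _; set g := nth g0 _ m; apply: eq_bigr => i _; rewrite !tnth_mktuple /W.
    case: eqP => [->|_]; last ring.
    by case: ifP => _; ring.
  rewrite -bigA_distr_bigA (bigD1 k) //=.
  have -> : \sum_(j < N) W k j = B * h *+ 2.
    rewrite (bigD1 ord0) //= big1 ?addr0; first by rewrite /W !eqxx.
    by move=> j /negbTE jn; rewrite /W eqxx jn.
  have -> : \prod_(i | i != k) \sum_(j < N) W i j = C.
    apply: eq_bigr => i /negbTE ik; rewrite /W ik sumr_const card_ord.
    by rewrite /h -(mulr_natr (M *+ 2 / N%:R) N) divfK // gt_eqF.
  have x0 : 0 <= B * M * C *+ 4 / e.
    apply: divr_ge0; last exact: ltW.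
    by apply: mulrn_wge0; rewrite mulr_ge0 // mulr_ge0 // ltW.
  have /andP[_ xN] := truncn_itv x0.
  rewrite -/N' -/N ltr_pdivrMr // in xN.
  have -> : B * h *+ 2 * C = B * M * C *+ 4 / N%:R.
    rewrite /h; field; by rewrite gt_eqF.
  rewrite ler_pdivrMr //; lra.
Qed.

Lemma lebesgue_nullS (R : realType) n (A B : set (n.-tuple R)) :
  B `<=` A -> lebesgue_null A -> lebesgue_null B.
Proof.
move=> BA nA e e0; have [lo [hi [h1 h2 h3]]] := nA e e0.
by exists lo, hi; split => //; exact: subset_trans h2.
Qed.

Lemma hyper_negligible (R : realType) n (P : probability (n.-tuple R) R)
  (c : 'I_n -> R) (k : 'I_n) : c k != 0 -> abs_cont_lebesgue P ->
  P.-negligible [set a : n.-tuple R | \sum_i c i * tnth a i = 0].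
Proof.
move=> ck ac.
pose f (M : nat) (a : n.-tuple R) :=
  (\sum_i c i * tnth a i == 0) && (\sum_i `|tnth a i| <= M.+1%:R).
pose A M := [set a | f M a].
have mA : forall M, measurable (A M).
  move=> M.
  have mf : measurable_fun setT (f M).
    apply: measurable_and.
      apply: measurable_fun_eqr; last exact: measurable_cst.
      apply: measurable_sum => i.
      apply: measurable_funM; first exact: measurable_cst.
      exact: measurable_tnth.
    apply: measurable_fun_ler; last exact: measurable_cst.
    apply: measurable_sum => i.
    apply: measurableT_comp; first exact: normr_measurable.
    exact: measurable_tnth.
  have := mf measurableT [set true] I.
  by rewrite setTI; congr measurable; apply/seteqP; split => a /=.
have nA : forall M, P.-negligible (A M).
  move=> M; apply/negligibleP => //; apply: ac => //.
  apply: (lebesgue_nullS _ (hyper_null (M := M.+1%:R) ck _)) => //.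
  move=> a; rewrite /A /f /= => /andP[/eqP s0 sb]; split => // i.
  apply: le_trans sb.
  rewrite (bigD1 i) //= lerDl; apply: sumr_ge0 => j _; exact: normr_ge0.
apply: (negligibleS _ (negligible_bigcup nA)).
move=> a /= s0; exists (Num.trunc (\sum_i `|tnth a i|)) => //.
rewrite /A /f /= s0 eqxx /=.
have x0 : 0 <= \sum_i `|tnth a i| by apply: sumr_ge0 => i _; exact: normr_ge0.
have := truncn_itv x0; move=> /andP[_ ?]; exact: ltW.
Qed.

Lemma bad_negligible (R : realType) d (SS : {set {set 'I_d}})
  (P : probability (#|SS|.-tuple R) R) :
  abs_cont_lebesgue P ->
  P.-negligible [set a : #|SS|.-tuple R | ~ generic a].
Proof.
move=> ac.
pose c0 : {ffun 'I_#|SS| -> 'I_3} := [ffun => ord0].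
pose cs := [seq c <- index_enum {ffun 'I_#|SS| -> 'I_3} | c != c0].
pose H (c : {ffun 'I_#|SS| -> 'I_3}) :=
  [set a : #|SS|.-tuple R | \sum_i w3 R (c i) * tnth a i = 0].
pose F m := if (m < size cs)%N then H (nth c0 cs m) else set0.
have nF : forall m, P.-negligible (F m).
  move=> m; rewrite /F; case: ifP => ms; last exact: negligible_set0.
  set c := nth c0 cs m.
  have : c \in cs by rewrite mem_nth.
  rewrite mem_filter => /andP[cnz _].
  have [k ck] : exists k, c k != ord0.
    apply/existsP; move: cnz; apply: contraR; rewrite negb_exists => /forallP Hc.
    apply/eqP/ffunP => k; rewrite ffunE; apply/eqP; have := Hc k; by rewrite negbK.
  apply: (hyper_negligible (k := k)) => //.
  move: ck; rewrite /w3; case: (c k) => [[|[|[|]]] ?] //= _.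
apply: (negligibleS _ (negligible_bigcup nF)).
move=> a /= ng.
case: (pselect ((\bigcup_m F m) a)) => // nin; exfalso; apply: ng => c cnz.
apply/eqP => s0; apply: nin.
have cin : c \in cs by rewrite mem_filter cnz mem_index_enum.
exists (index c cs) => //; rewrite /F index_mem cin nth_index //.
Qed.

Theorem propositionG1 (R : realType) (d : nat) (SS : {set {set 'I_d}})
    (P : probability (#|SS|.-tuple R) R) :
  msp_family SS ->
  abs_cont_lebesgue P ->
  {ae P, forall a : #|SS|.-tuple R, SMSP (fstar a)}.
Proof.
move=> msp ac.
apply: (negligibleS _ (bad_negligible ac)) => a /= nS gen; apply: nS.
exact: smsp_of_generic msp gen.
Qed.
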